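(* Let $d \geq 2$, $n \geq 1$, $\varphi(t) = \frac12 t^2$ and $w_{ij} = 1$ for all $i,j$. If $X \in \mathcal{M}$ is a critical point of $f(X) = \frac14\|X^\top X\|_F^2$ at which the Riemannian Hessian is negative semidefinite, then $\mathrm{rank}(X) < d$.
   Context: $\mathcal{M} = (\mathbb{S}^{d-1})^n$ is the set of $X \in \mathbb{R}^{d\times n}$ with unit-norm columns $x_1,\dots,x_n$, a Riemannian submanifold of $\mathbb{R}^{d\times n}$ with the Frobenius metric; gradient and Hessian are Riemannian. *)

(* Defs.v *)
(* Oblique manifold M = (S^{d-1})^n as a Riemannian submanifold
   of R^{d x n} (Frobenius metric). *)
From HB Require Import structures.
From mathcomp Require Import all_boot all_order all_algebra.
From mathcomp Require Import reals.
Set Implicit Arguments. Unset Strict Implicit. Unset Printing Implicit Defensive.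
Import Order.TTheory GRing.Theory Num.Theory.
Local Open Scope ring_scope.

Definition frob (R : realType) (p q : nat) (A B : 'M[R]_(p, q)) : R :=
  \sum_(i < p) \sum_(j < q) A i j * B i j.

Section Oblique.
Variables (R : realType) (d n : nat).
Implicit Types X V Z : 'M[R]_(d, n).


Definition on_manifold X : Prop := forall j : 'I_n, \sum_(i < d) X i j ^+ 2 = 1.

Definition tangent X V : Prop := forall j : 'I_n, \sum_(i < d) X i j * V i j = 0.

Definition proj X Z : 'M[R]_(d, n) :=
  \matrix_(i < d, j < n) (Z i j - (\sum_(k < d) X k j * Z k j) * X i j).

(* cost f(X) = 1/4 ||X^T X||_F^2, i.e. sum_{ij} w_ij phi(<x_i,x_j>) / 2 with
   phi(t) = t^2/2, w_ij = 1 *)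
Definition cost X : R := 4^-1 * frob (X^T *m X) (X^T *m X).

Definition egrad X : 'M[R]_(d, n) := X *m X^T *m X.
Definition ehess X V : 'M[R]_(d, n) :=
  V *m (X^T *m X) + X *m (V^T *m X) + X *m (X^T *m V).

Definition rgrad X : 'M[R]_(d, n) := proj X (egrad X).

(* Riemannian Hessian on the product of spheres (Riemannian submanifold):
   Hess f(X)[V] = Proj_X(D^2 f(X)[V]) - V diag(<x_j, (grad f(X))_j>) *)
Definition rhess X V : 'M[R]_(d, n) :=
  proj X (ehess X V) -
  \matrix_(i < d, j < n) (V i j * \sum_(k < d) X k j * egrad X k j).

Definition rhess_nsd X : Prop :=
  forall V, tangent X V -> frob V (rhess X V) <= 0.

End Oblique.

(* Main.v *)
Require Import Defs.
From HB Require Import structures.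
From mathcomp Require Import all_boot all_order all_algebra.
From mathcomp Require Import reals.
From mathcomp Require Import ring lra.
Import Order.TTheory GRing.Theory Num.Theory.
Local Open Scope ring_scope.
Set Implicit Arguments. Unset Strict Implicit.

Section Aux.
Variables (R : realType) (d n : nat) (X : 'M[R]_(d, n)).

Definition G (a b : 'I_n) : R := \sum_(i < d) X i a * X i b.
Definition lam (j : 'I_n) : R := \sum_(k < d) X k j * egrad X k j.

Lemma GC a b : G a b = G b a.
Proof. by apply: eq_bigr => i _; rewrite mulrC. Qed.

Lemma egradE i j : egrad X i j = \sum_(m < n) X i m * G m j.
Proof.
rewrite /egrad mxE.
under eq_bigr => l _ do rewrite mxE big_distrl /=.
rewrite exchange_big /=; apply: eq_bigr => m _.
rewrite /G big_distrr /=; apply: eq_bigr => l _.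
by rewrite mxE mulrA.
Qed.

Lemma lamE j : lam j = \sum_(m < n) G j m ^+ 2.
Proof.
rewrite /lam.
under eq_bigr => k _ do rewrite egradE big_distrr /=.
rewrite exchange_big /=; apply: eq_bigr => m _.
rewrite expr2 {2}(GC j m) /G big_distrl /=; apply: eq_bigr => k _.
by rewrite mulrA.
Qed.

Lemma critE : rgrad X = 0 -> forall i j, egrad X i j = lam j * X i j.
Proof.
move=> H i j; have := congr1 (fun M : 'M[R]_(d, n) => M i j) H.
rewrite /rgrad /proj !mxE => /eqP; rewrite subr_eq0 => /eqP ->.
by rewrite /lam.
Qed.

Lemma crit2 : rgrad X = 0 -> forall k j,
  \sum_(m < n) G k m * G m j = lam j * G k j.
Proof.
move=> H k j.
have E : \sum_(i < d) X i k * egrad X i j = lam j * G k j.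
  rewrite /G big_distrr /=; apply: eq_bigr => i _; rewrite critE //; ring.
rewrite -E.
under [RHS]eq_bigr => i _ do rewrite egradE big_distrr /=.
rewrite [RHS]exchange_big /=; apply: eq_bigr => m _.
rewrite /G big_distrl /=; apply: eq_bigr => i _; ring.
Qed.

Lemma sum_delta (F : 'I_n -> R) j : \sum_(l < n) (l == j)%:R * F l = F j.
Proof.
rewrite (bigD1 j) //= eqxx mul1r big1 ?addr0 // => l /negbTE ->.
by rewrite mul0r.
Qed.

Lemma sq_expand m (a b : 'I_m -> R) c :
  \sum_(l < m) (a l - c * b l) ^+ 2 =
  \sum_(l < m) a l ^+ 2 - c *+ 2 * \sum_(l < m) a l * b l
    + c ^+ 2 * \sum_(l < m) b l ^+ 2.
Proof.
rewrite !mulr_sumr -sumrB -big_split /=; apply: eq_bigr => l _; ring.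
Qed.

End Aux.
Section Q.
Variables (R : realType) (d n : nat) (X : 'M[R]_(d, n)).

Lemma rhessE (V : 'M[R]_(d, n)) i j : rhess X V i j =
  ehess X V i j - (\sum_(k < d) X k j * ehess X V k j) * X i j - V i j * lam X j.
Proof.
rewrite /rhess /proj /lam; move: (egrad X) (ehess X V) => Eg Z.
by rewrite !mxE.
Qed.

Lemma ehessE (V : 'M[R]_(d, n)) i j : ehess X V i j =
  (V *m (X^T *m X)) i j + (X *m (V^T *m X)) i j + (X *m (X^T *m V)) i j.
Proof.
rewrite /ehess; move: (V *m (X^T *m X)) (X *m (V^T *m X)) (X *m (X^T *m V)).
by move=> A B C; rewrite !mxE.
Qed.

Lemma Qform (j : 'I_n) (v : 'I_d -> R) : on_manifold X ->
  \sum_(i < d) X i j * v i = 0 ->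
  frob (\matrix_(i < d, l < n) (v i * (l == j)%:R))
       (rhess X (\matrix_(i < d, l < n) (v i * (l == j)%:R)))
  = (1 - lam X j) * \sum_(i < d) v i ^+ 2
    + \sum_(l < n) (\sum_(m < d) X m l * v m) ^+ 2.
Proof.
move=> hm ho; set V := \matrix_(i < d, l < n) _.
have fr : forall M : 'M[R]_(d, n), frob V M = \sum_(i < d) v i * M i j.
  move=> M; rewrite /frob; apply: eq_bigr => i _.
  under eq_bigr => l _ do rewrite mxE -mulrA mulrCA.
  by rewrite (sum_delta (fun l => v i * M i l)).
have Vj : forall i, V i j = v i by move=> i; rewrite mxE eqxx mulr1.
have Z1 : forall i, (V *m (X^T *m X)) i j = v i.
  move=> i; rewrite mxE.
  under eq_bigr => l _ do rewrite [V i l]mxE -mulrA mulrCA.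
  rewrite (sum_delta (fun l => v i * (X^T *m X) l j)) mxE.
  under eq_bigr => m _ do rewrite mxE -expr2.
  by rewrite hm mulr1.
have Z2 : forall i, (X *m (V^T *m X)) i j = 0.
  move=> i; rewrite mxE big1 // => l _; rewrite mxE.
  under eq_bigr => m _ do rewrite !mxE -mulrA mulrCA.
  rewrite -mulr_sumr.
  have -> : \sum_(m < d) v m * X m j = 0.
    rewrite -[RHS]ho; apply: eq_bigr => m _; exact: mulrC.
  by rewrite !mulr0.
have Z3 : forall i, (X *m (X^T *m V)) i j
    = \sum_(l < n) X i l * \sum_(m < d) X m l * v m.
  move=> i; rewrite mxE; apply: eq_bigr => l _; rewrite mxE.
  congr (_ * _); apply: eq_bigr => m _; by rewrite !mxE eqxx mulr1.
rewrite fr.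
have ho' : \sum_(i < d) v i * X i j = 0.
  rewrite -[RHS]ho; apply: eq_bigr => m _; exact: mulrC.
under eq_bigr => i _ do rewrite rhessE !ehessE Z1 Z2 Z3 Vj addr0.

set s := \sum_(k < d) X k j * ehess X V k j.
transitivity (\sum_(i < d) ((1 - lam X j) * v i ^+ 2
   + v i * \sum_(l < n) X i l * \sum_(m < d) X m l * v m)
   - s * \sum_(i < d) v i * X i j).
  rewrite mulr_sumr -sumrB; apply: eq_bigr => i _; ring.
rewrite ho' mulr0 subr0 big_split /= -mulr_sumr; congr (_ + _).
under eq_bigr => i _ do rewrite mulr_sumr.
rewrite exchange_big /=; apply: eq_bigr => l _.
rewrite expr2 mulr_suml; apply: eq_bigr => i _; ring.
Qed.
End Q.

Theorem mainTheorem18 (R : realType) (d n : nat) (X : 'M[R]_(d, n)) :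
  (2 <= d)%N -> (1 <= n)%N ->
  on_manifold X ->
  rgrad X = 0 ->
  rhess_nsd X ->
  (\rank X < d)%N.
Proof.
move=> hd hn hm hc hh.
have hm' : forall j, \sum_(i < d) X i j * X i j = 1.
  by move=> j; rewrite -(hm j); apply: eq_bigr => i _; rewrite expr2.
have vsq : forall j k, \sum_(i < d) (X i k - G X j k * X i j) ^+ 2
    = 1 - G X j k ^+ 2.
  move=> j k; rewrite sq_expand.
  rewrite (hm k) (hm j) -/(G X k j) (GC X k j); ring.
have key : forall j k, 1 - G X j k ^+ 2 - lam X j + lam X k <= 0.
  move=> j k; set c := G X j k.
  pose v := fun i => X i k - c * X i j.
  have ho : \sum_(i < d) X i j * v i = 0.
    rewrite /v; under eq_bigr => i _ do rewrite mulrBr mulrCA.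
    by rewrite sumrB -mulr_sumr hm' mulr1 subrr.
  have ht : tangent X (\matrix_(i < d, l < n) (v i * (l == j)%:R)).
    move=> l; under eq_bigr => i _ do rewrite mxE.
    case: (eqVneq l j) => [->|/negbTE hl].
      by under eq_bigr => i _ do rewrite mulr1.
    by rewrite big1 // => i _; rewrite !mulr0.
  have := hh _ ht; rewrite Qform //.
  rewrite /v vsq.
  have E1 : forall l, \sum_(m < d) X m l * (X m k - c * X m j)
      = G X l k - c * G X l j.
    move=> l; under eq_bigr => m _ do rewrite mulrBr mulrCA.
    by rewrite sumrB -mulr_sumr.
  under eq_bigr => l _ do rewrite E1.
  rewrite sq_expand.
  have L1 : \sum_(l < n) G X l k ^+ 2 = lam X k.
    by rewrite lamE; apply: eq_bigr => l _; rewrite GC.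
  have L2 : \sum_(l < n) G X l j ^+ 2 = lam X j.
    by rewrite lamE; apply: eq_bigr => l _; rewrite GC.
  have L3 : \sum_(l < n) G X l k * G X l j = lam X j * c.
    by rewrite /c GC -crit2 //; apply: eq_bigr => l _; rewrite GC.
  rewrite L1 L2 L3 -/c => h.
  have E : (1 - lam X j) * (1 - c ^+ 2) +
      (lam X k - c *+ 2 * (lam X j * c) + c ^+ 2 * lam X j)
      = 1 - c ^+ 2 - lam X j + lam X k by ring.
  by rewrite -E.
have hcol : forall j k i, X i k = G X j k * X i j.
  move=> j k i.
  have h1 := key j k; have h2 := key k j; rewrite (GC X k j) in h2.
  have hs : \sum_(i < d) (X i k - G X j k * X i j) ^+ 2 <= 0.
    rewrite vsq; lra.
  have : (X i k - G X j k * X i j) ^+ 2 <= 0.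
    apply: le_trans hs; rewrite (bigD1 i) //= lerDl.
    by apply: sumr_ge0 => m _; exact: sqr_ge0.
  move=> h; have : (X i k - G X j k * X i j) ^+ 2 = 0.
    by apply/eqP; rewrite eq_le h sqr_ge0.
  by move/eqP; rewrite sqrf_eq0 subr_eq0 => /eqP.
pose j0 : 'I_n := Ordinal hn.
have EX : X = col j0 X *m \row_(k < n) G X j0 k.
  apply/matrixP => i k; rewrite !mxE big_ord1 !mxE (hcol j0 k i); ring.
rewrite EX; apply: leq_ltn_trans (mulmx_max_rank _ _) _.
by [].
Qed.
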